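(* Let $\Delta=\prod_{1\le i<j\le n}(x_i-x_j)$ and, for $0\le k\le n-1$ and $n-1\ge m_1>m_2>\dots>m_k\ge1$, let $\omega_{m_1,\dots,m_k}=d_{m_1}d_{m_2}\cdots d_{m_k}\Delta\in\Omega_n$ (with $\omega=\Delta$ when $k=0$). Then $\omega_{m_1,\dots,m_k}\in H_{\binom n2-\sum_i m_i,\,k}$ and $\sigma\omega_{m_1,\dots,m_k}=\mathrm{sgn}(\sigma)\omega_{m_1,\dots,m_k}$ for all $\sigma\in S_n$.
   Context: $\Omega_n=\mathbb{R}[x_1,\dots,x_n]\otimes\wedge\mathbb{R}^n$, with $S_n$ permuting indices of the $x_i$ and $dx_i$ simultaneously. With $\partial_i=\partial/\partial x_i$: $d_j(h\,dx_{i_1}\wedge\cdots\wedge dx_{i_k})=\sum_l(\partial_l^jh)\,dx_l\wedge dx_{i_1}\wedge\cdots\wedge dx_{i_k}$ and $\delta_l(h\,dx_{i_1}\wedge\cdots\wedge dx_{i_k})=\sum_j(\partial_j^lh)\,\iota(dx_j)(dx_{i_1}\wedge\cdots\wedge dx_{i_k})$, where $\iota(dx_j)$ is contraction ($0$ if $j\notin\{i_1<\dots<i_k\}$, $(-1)^{r-1}dx_{i_1}\wedge\cdots\widehat{dx_{i_r}}\cdots\wedge dx_{i_k}$ if $j=i_r$). A polynomial $f$ is $S_n$-harmonic if $\sum_i\partial_i^kf=0$ for $k=1,\dots,n$. $H_{r,s}$ is the space of $s$-forms $\sum_{i_1<\dots<i_s}h_{i_1\dots i_s}dx_{i_1}\wedge\cdots\wedge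 dx_{i_s}$ with every $h_{i_1\dots i_s}$ $S_n$-harmonic and homogeneous of degree $r$, and annihilated by $\delta_j$ for $j=0,\dots,n-1$. *)

(* Defs.v *)
From HB Require Import structures.
From mathcomp Require Import all_boot all_order all_algebra all_fingroup.
From mathcomp Require Import reals.
From mathcomp Require Import mpoly.
Set Implicit Arguments. Unset Strict Implicit. Unset Printing Implicit Defensive.
Import Order.TTheory GRing.Theory Num.Theory.
Local Open Scope ring_scope.

(* Omega_n = R[x_1..x_n] (x) wedge R^n, over a real field R (the paper: R = reals).
   A form is stored by its coefficients: the coefficient of
   dx_{i_1} /\ ... /\ dx_{i_k} (i_1 < ... < i_k) is [w I] with I = {i_1,...,i_k}.
   Indices are 0-based: x_i for i : 'I_n. *)
Definition form (R : nzRingType) (n : nat) := {ffun {set 'I_n} -> {mpoly R[n]}}.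

Definition dpow (R : nzRingType) n (i : 'I_n) (k : nat) (p : {mpoly R[n]}) :
  {mpoly R[n]} := iter k (mderiv i) p.

Definition fmapf (R : nzRingType) n (f : {mpoly R[n]} -> {mpoly R[n]})
  (w : form R n) : form R n := [ffun I => f (w I)].

(* left exterior multiplication by dx_l:
   dx_l /\ dx_I = 0 if l \in I, else (-1)^#{i in I | i < l} dx_{I u {l}} *)
Definition wedge_dx (R : nzRingType) n (l : 'I_n) (w : form R n) : form R n :=
  [ffun T : {set 'I_n} => if l \in T
             then (-1) ^+ #|[set i in T | (i < l)%N]| * w (T :\ l) else 0].

(* contraction iota(dx_j):
   iota(dx_j) dx_I = 0 if j \notin I, (-1)^(r-1) dx_{I \ {j}} if j = i_r,
   where r-1 = #{i in I | i < j} *)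
Definition contr_dx (R : nzRingType) n (j : 'I_n) (w : form R n) : form R n :=
  [ffun T : {set 'I_n} => if j \in T then 0
             else (-1) ^+ #|[set i in T | (i < j)%N]| * w (j |: T)].

Definition dop (R : nzRingType) n (j : nat) (w : form R n) : form R n :=
  \sum_(l < n) wedge_dx l (fmapf (dpow l j) w).

Definition deltaop (R : nzRingType) n (l : nat) (w : form R n) : form R n :=
  \sum_(j < n) contr_dx j (fmapf (dpow j l) w).

Definition Sn_harmonic (R : nzRingType) n (f : {mpoly R[n]}) : Prop :=
  forall k : nat, (1 <= k <= n)%N -> \sum_(i < n) dpow i k f = 0.

Definition in_H (R : nzRingType) n (r s : nat) (w : form R n) : Prop :=
  [/\ (forall I : {set 'I_n}, #|I| != s -> w I = 0),
      (forall I : {set 'I_n}, Sn_harmonic (w I) /\ w I \is r.-homog)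
    & (forall j : nat, (j < n)%N -> deltaop j w = 0)].

(* action of sigma in S_n: x_i |-> x_{sigma i}, dx_i |-> dx_{sigma i}.
   h dx_{i_1} /\ ... /\ dx_{i_k} |-> (sigma h) dx_{sigma i_1} /\ ... /\ dx_{sigma i_k};
   reordering the wedge into increasing order contributes the sign
   (-1)^(number of inversions of sigma on I). *)
Definition act_form (R : nzRingType) n (s : 'S_n) (w : form R n) : form R n :=
  \sum_(I : {set 'I_n})
    [ffun T : {set 'I_n} => if T == s @: I then
       (-1) ^+ #|[set p : 'I_n * 'I_n |
                  [&& p.1 \in I, p.2 \in I, (p.1 < p.2)%N & (s p.2 < s p.1)%N]]|
       * msym s (w I) else 0].

Definition Vdm (R : nzRingType) n : {mpoly R[n]} :=
  \prod_(i < n) \prod_(j < n | (i < j)%N) ('X_i - 'X_j).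

Definition zero_form (R : nzRingType) n (p : {mpoly R[n]}) : form R n :=
  [ffun I => if I == set0 then p else 0].

(* omega_{m_1,...,m_k} = d_{m_1} d_{m_2} ... d_{m_k} Delta  for ms = [:: m_1; ...; m_k] *)
Definition omega (R : nzRingType) n (ms : seq nat) : form R n :=
  foldr (fun m w => dop m w) (zero_form (Vdm R n)) ms.

(* Main.v *)
Require Import Defs.
From HB Require Import structures.
From mathcomp Require Import all_boot all_order all_algebra all_fingroup.
From mathcomp Require Import reals.
From mathcomp Require Import mpoly.
From mathcomp Require Import zify ring lra.
Set Implicit Arguments. Unset Strict Implicit. Unset Printing Implicit Defensive.
Import Order.TTheory GRing.Theory Num.Theory.
Local Open Scope ring_scope.

Section P1.
Variable R : realType.
Variable n : nat.
Local Notation MP := {mpoly R[n]}.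

Lemma sign_mul (k : nat) (p : MP) : (-1) ^+ k * p = if odd k then - p else p.
Proof. by rewrite -signr_odd mulr_sign. Qed.

Lemma dpowE (i : 'I_n) k (p : MP) : dpow i k p = mderivm (mnm1 i *+ k)%MM p.
Proof.
rewrite /dpow; elim: k => [|k IH] /=; first by rewrite mulm0n mderivm0m.
by rewrite mulmS addmC mderivmDm mderivmU1m IH.
Qed.

Lemma dpowD i k (p q : MP) : dpow i k (p + q) = dpow i k p + dpow i k q.
Proof. by rewrite !dpowE mderivmD. Qed.
Lemma dpowN i k (p : MP) : dpow i k (- p) = - dpow i k p.
Proof. by rewrite !dpowE mderivmN. Qed.
Lemma dpow0 i k : dpow i k (0 : MP) = 0.
Proof. by rewrite !dpowE raddf0. Qed.
Lemma dpowZ i k c (p : MP) : dpow i k (c *: p) = c *: dpow i k p.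
Proof. by rewrite !dpowE mderivmZ. Qed.
Lemma dpow_sum i k (I : Type) (r : seq I) (P : pred I) (F : I -> MP) :
  dpow i k (\sum_(x <- r | P x) F x) = \sum_(x <- r | P x) dpow i k (F x).
Proof. by rewrite !dpowE raddf_sum; apply: eq_bigr => x _; rewrite dpowE. Qed.
Lemma dpow_sign i k e (p : MP) : dpow i k ((-1) ^+ e * p) = (-1) ^+ e * dpow i k p.
Proof. by rewrite !sign_mul; case: (odd e); rewrite ?dpowN. Qed.
Lemma dpow_comm i j a b (p : MP) : dpow i a (dpow j b p) = dpow j b (dpow i a p).
Proof. by rewrite !dpowE -!mderivmDm addmC. Qed.
Lemma dpow_add i a b (p : MP) : dpow i a (dpow i b p) = dpow i (a + b) p.
Proof. by rewrite /dpow iterD. Qed.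
Lemma dpow_mderiv i j k (p : MP) : dpow i k (mderiv j p) = mderiv j (dpow i k p).
Proof. by rewrite -[mderiv j p]/(dpow j 1 p) dpow_comm. Qed.

End P1.

Section P2.
Variable R : realType.
Variable n : nat.
Local Notation MP := {mpoly R[n]}.
Local Notation Frm := (Defs.form R n).

Definition cnt (T : {set 'I_n}) (l : 'I_n) := #|[set i in T | (i < l)%N]|.

Lemma cnt_U1 (T : {set 'I_n}) j l : j \notin T -> cnt (j |: T) l = ((j < l)%N + cnt T l)%N.
Proof.
move=> jT; rewrite /cnt.
have -> : [set i in j |: T | (i < l)%N] =
   if (j < l)%N then j |: [set i in T | (i < l)%N] else [set i in T | (i < l)%N].
  apply/setP => i; rewrite !inE; case: (ltnP j l) => jl; rewrite ?inE;
  case: (eqVneq i j) => [->|] //=; by rewrite ?jl //= ?(negbTE jT) // ltnNge jl.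
case: (ltnP j l) => _; last by [].
by rewrite cardsU1 inE (negbTE jT).
Qed.

Lemma cnt_D1 (T : {set 'I_n}) j l : l \in T -> cnt T j = ((l < j)%N + cnt (T :\ l) j)%N.
Proof.
move=> lT; rewrite -{1}(setD1K lT) cnt_U1 //; by rewrite !inE eqxx.
Qed.

Lemma ltn_sym_one (i j : 'I_n) : i != j -> ((i < j)%N + (j < i)%N = 1)%N.
Proof.
move=> ne; case: (ltngtP i j) => //= h; move: ne; by rewrite (val_inj h) eqxx.
Qed.

Lemma wedgeE l (w : Frm) T :
  wedge_dx l w T = if l \in T then (-1) ^+ cnt T l * w (T :\ l) else 0.
Proof. by rewrite ffunE. Qed.
Lemma contrE j (w : Frm) T :
  contr_dx j w T = if j \in T then 0 else (-1) ^+ cnt T j * w (j |: T).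
Proof. by rewrite ffunE. Qed.

Lemma wedgeD l (v w : Frm) : wedge_dx l (v + w) = wedge_dx l v + wedge_dx l w.
Proof. by apply/ffunP => T; rewrite !ffunE; case: ifP; rewrite ?mulrDr ?addr0. Qed.
Lemma wedgeZ l c (w : Frm) : wedge_dx l (c *: w) = c *: wedge_dx l w.
Proof. by apply/ffunP => T; rewrite !ffunE; case: ifP; rewrite ?scalerAr ?scaler0. Qed.
Lemma wedge0 l : wedge_dx l (0 : Frm) = 0.
Proof. by apply/ffunP => T; rewrite !ffunE; case: ifP; rewrite ?mulr0. Qed.
Lemma wedge_sum l (I : Type) (r : seq I) (P : pred I) (G : I -> Frm) :
  wedge_dx l (\sum_(x <- r | P x) G x) = \sum_(x <- r | P x) wedge_dx l (G x).
Proof. exact: (big_morph _ (wedgeD l) (wedge0 l)). Qed.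

Lemma contrD l (v w : Frm) : contr_dx l (v + w) = contr_dx l v + contr_dx l w.
Proof. by apply/ffunP => T; rewrite !ffunE; case: ifP; rewrite ?mulrDr ?addr0. Qed.
Lemma contrZ l c (w : Frm) : contr_dx l (c *: w) = c *: contr_dx l w.
Proof. by apply/ffunP => T; rewrite !ffunE; case: ifP; rewrite ?scalerAr ?scaler0. Qed.
Lemma contr0 l : contr_dx l (0 : Frm) = 0.
Proof. by apply/ffunP => T; rewrite !ffunE; case: ifP; rewrite ?mulr0. Qed.
Lemma contr_sum l (I : Type) (r : seq I) (P : pred I) (G : I -> Frm) :
  contr_dx l (\sum_(x <- r | P x) G x) = \sum_(x <- r | P x) contr_dx l (G x).
Proof. exact: (big_morph _ (contrD l) (contr0 l)). Qed.

Lemma fmapD i k (v w : Frm) : fmapf (dpow i k) (v + w) = fmapf (dpow i k) v + fmapf (dpow i k) w.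
Proof. by apply/ffunP => T; rewrite !ffunE dpowD. Qed.
Lemma fmapZ i k c (w : Frm) : fmapf (dpow i k) (c *: w) = c *: fmapf (dpow i k) w.
Proof. by apply/ffunP => T; rewrite !ffunE dpowZ. Qed.
Lemma fmap0 i k : fmapf (dpow i k) (0 : Frm) = 0.
Proof. by apply/ffunP => T; rewrite !ffunE dpow0. Qed.
Lemma fmap_sum i k (I : Type) (r : seq I) (P : pred I) (G : I -> Frm) :
  fmapf (dpow i k) (\sum_(x <- r | P x) G x) = \sum_(x <- r | P x) fmapf (dpow i k) (G x).
Proof. exact: (big_morph _ (fmapD i k) (fmap0 i k)). Qed.
Lemma fmap_fmap i j a b (w : Frm) :
  fmapf (dpow i a) (fmapf (dpow j b) w) = fmapf (fun p => dpow i a (dpow j b p)) w.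
Proof. by apply/ffunP => T; rewrite !ffunE. Qed.
Lemma fmap_wedge i k l (w : Frm) :
  fmapf (dpow i k) (wedge_dx l w) = wedge_dx l (fmapf (dpow i k) w).
Proof. by apply/ffunP => T; rewrite !ffunE; case: ifP; rewrite ?dpow_sign ?dpow0 ?ffunE. Qed.
Lemma fmap_contr i k l (w : Frm) :
  fmapf (dpow i k) (contr_dx l w) = contr_dx l (fmapf (dpow i k) w).
Proof. by apply/ffunP => T; rewrite !ffunE; case: ifP; rewrite ?dpow_sign ?dpow0 ?ffunE. Qed.

Lemma dopD m (v w : Frm) : dop m (v + w) = dop m v + dop m w.
Proof. by rewrite /dop -big_split; apply: eq_bigr => l _; rewrite fmapD wedgeD. Qed.
Lemma dopZ m c (w : Frm) : dop m (c *: w) = c *: dop m w.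
Proof. by rewrite /dop scaler_sumr; apply: eq_bigr => l _; rewrite fmapZ wedgeZ. Qed.
Lemma dop0 m : dop m (0 : Frm) = 0.
Proof. by rewrite /dop big1 // => l _; rewrite fmap0 wedge0. Qed.
Lemma deltaD m (v w : Frm) : deltaop m (v + w) = deltaop m v + deltaop m w.
Proof. by rewrite /deltaop -big_split; apply: eq_bigr => l _; rewrite fmapD contrD. Qed.
Lemma delta0 m : deltaop m (0 : Frm) = 0.
Proof. by rewrite /deltaop big1 // => l _; rewrite fmap0 contr0. Qed.

Lemma CW j l (v : Frm) :
  contr_dx j (wedge_dx l v) + wedge_dx l (contr_dx j v) = if j == l then v else 0.
Proof.
apply/ffunP => T; rewrite ffunE !contrE !wedgeE !contrE.
case: (eqVneq j l) => [<-|ne].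
  case jT: (j \in T).
    rewrite add0r !inE eqxx /= mulrA -exprD (cnt_D1 j jT) ltnn add0n.
    by rewrite addnn -signr_odd odd_double expr0 mul1r setD1K.
  rewrite !inE eqxx /= addr0 mulrA -exprD cnt_U1 ?jT // ltnn add0n.
  by rewrite addnn -signr_odd odd_double expr0 mul1r setU1K ?jT.
rewrite ffunE.
case jT: (j \in T).
  rewrite add0r; case lT: (l \in T); last by [].
  by rewrite !inE jT ne /= mulr0.
rewrite !inE [l == j]eq_sym (negbTE ne) /=; case lT: (l \in T); last first.
  by rewrite addr0 mulr0.
rewrite ?inE ?jT ?andbF /=.
have -> : (j |: T) :\ l = j |: (T :\ l).
  by apply/setP => i; rewrite !inE; case: (eqVneq i j) => [->|]; rewrite ?ne ?andbT.
rewrite cnt_U1 ?jT // (cnt_D1 j lT) !mulrA -!exprD.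
have h := ltn_sym_one ne.
have -> : ((l < j)%N + cnt (T :\ l) j + ((j < l)%N + cnt T l))%N =
          (1 + (cnt T l + cnt (T :\ l) j))%N.
  by rewrite -h; lia.
by rewrite exprD expr1 mulN1r mulNr addNr.
Qed.
End P2.

Section P3.
Variable R : realType.
Variable n : nat.
Local Notation MP := {mpoly R[n]}.
Local Notation Frm := (Defs.form R n).

Lemma fmap_comm i j a b (w : Frm) :
  fmapf (dpow i a) (fmapf (dpow j b) w) = fmapf (dpow j b) (fmapf (dpow i a) w).
Proof. by apply/ffunP => T; rewrite !ffunE dpow_comm. Qed.

Lemma anticomm a b (w : Frm) :
  deltaop a (dop b w) + dop b (deltaop a w) = \sum_(j < n) fmapf (dpow j (a + b)) w.
Proof.
rewrite /deltaop /dop.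
under eq_bigr => j _ do rewrite fmap_sum contr_sum.
under [X in _ + X = _]eq_bigr => l _ do rewrite fmap_sum wedge_sum.
rewrite [X in _ + X = _]exchange_big /= -big_split /=.
apply: eq_bigr => j _; rewrite -big_split /=.
under eq_bigr => l _ do rewrite fmap_wedge fmap_contr fmap_comm CW.
rewrite -big_mkcond /= (big_pred1 j); last by move=> l; rewrite eq_sym.
by apply/ffunP => T; rewrite !ffunE dpow_add addnC.
Qed.

Definition SH (p : MP) := forall k, (0 < k)%N -> \sum_(i < n) dpow i k p = 0.

Lemma SH0 : SH 0.
Proof. by move=> k _; rewrite big1 // => i _; rewrite dpow0. Qed.
Lemma SHD p q : SH p -> SH q -> SH (p + q).
Proof.
move=> hp hq k k0; under eq_bigr => i _ do rewrite dpowD.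
by rewrite big_split /= hp // hq // addr0.
Qed.
Lemma SHN p : SH p -> SH (- p).
Proof.
move=> hp k k0; under eq_bigr => i _ do rewrite dpowN.
by rewrite sumrN hp // oppr0.
Qed.
Lemma SH_sign e p : SH p -> SH ((-1) ^+ e * p).
Proof. by rewrite sign_mul; case: odd => //; apply: SHN. Qed.
Lemma SH_sum (I : Type) (r : seq I) (P : pred I) (G : I -> MP) :
  (forall x, P x -> SH (G x)) -> SH (\sum_(x <- r | P x) G x).
Proof. by move=> h; apply: big_ind => //; [apply: SH0 | apply: SHD]. Qed.
Lemma SH_dpow p l m : SH p -> SH (dpow l m p).
Proof.
move=> hp k k0; under eq_bigr => i _ do rewrite dpow_comm.
by rewrite -dpow_sum hp // dpow0.
Qed.

Lemma dopE m (w : Frm) T :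
  dop m w T = \sum_(l < n) (if l \in T then (-1) ^+ cnt T l * dpow l m (w (T :\ l)) else 0).
Proof. by rewrite /dop sum_ffunE; apply: eq_bigr => l _; rewrite wedgeE ffunE. Qed.

Lemma SH_dop m (w : Frm) : (forall T, SH (w T)) -> forall T, SH (dop m w T).
Proof.
move=> h T; rewrite dopE; apply: SH_sum => l _.
case: ifP => _; last exact: SH0.
by apply: SH_sign; apply: SH_dpow.
Qed.

Lemma sumfmap0 k (w : Frm) : (0 < k)%N -> (forall T, SH (w T)) ->
  \sum_(j < n) fmapf (dpow j k) w = 0.
Proof.
move=> k0 h; apply/ffunP => T; rewrite sum_ffunE ffunE.
under eq_bigr => j _ do rewrite ffunE.
exact: h.
Qed.

Definition Om (ms : seq nat) (p : MP) : Frm :=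
  foldr (fun m w => dop m w) (zero_form p) ms.

Lemma delta_zero a (p : MP) : deltaop a (zero_form p) = 0.
Proof.
rewrite /deltaop big1 // => j _; apply/ffunP => T; rewrite contrE !ffunE.
case: ifP => // _; have -> : (j |: T == set0) = false.
  by apply/negbTE/set0Pn; exists j; rewrite !inE eqxx.
by rewrite dpow0 mulr0.
Qed.

Lemma Om_delta (ms : seq nat) (p : MP) : SH p -> all (fun m => 0 < m)%N ms ->
  (forall T, SH (Om ms p T)) /\ (forall a, deltaop a (Om ms p) = 0).
Proof.
move=> hp; elim: ms => [|m ms IH] /=.
  move=> _; split; last by move=> a; apply: delta_zero.
  by move=> T; rewrite ffunE; case: ifP => _ //; apply: SH0.
case/andP => m0 /IH [h1 h2]; split; first exact: SH_dop.
move=> a; have := anticomm a m (Om ms p).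
rewrite h2 dop0 addr0 => ->; apply: sumfmap0 => //.
by rewrite addn_gt0 m0 orbT.
Qed.

End P3.

Section P4.
Variable R : realType.
Variable n : nat.
Local Notation MP := {mpoly R[n]}.
Local Notation Frm := (Defs.form R n).

Lemma supp_dop m k (w : Frm) : (forall T : {set 'I_n}, #|T| != k -> w T = 0) ->
  forall T : {set 'I_n}, #|T| != k.+1 -> dop m w T = 0.
Proof.
move=> h T hT; rewrite dopE big1 // => l _; case: ifP => // lT.
rewrite h ?dpow0 ?mulr0 //; apply: contra hT => /eqP e.
by rewrite (cardsD1 l T) lT e.
Qed.

Lemma supp_Om ms (p : MP) : forall T : {set 'I_n}, #|T| != size ms -> Om ms p T = 0.
Proof.
rewrite /Om; elim: ms => [|m ms IH] /= T hT; last exact: (supp_dop m IH hT).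
rewrite /zero_form ffunE; case: ifP => [/eqP e|//]; by move: hT; rewrite e cards0.
Qed.

Lemma homog_mderiv d i (p : MP) : p \is d.-homog -> mderiv i p \is d.-1.-homog.
Proof.
move=> /dhomogP hp; apply/dhomogP => m; rewrite mcoeff_msupp mcoeff_deriv => nz.
have nz' : p@_(m + mnm1 i)%MM != 0.
  by apply: contraNneq nz => ->; rewrite mul0rn.
have := hp _ (_ : (m + mnm1 i)%MM \in msupp p); rewrite mcoeff_msupp => /(_ nz').
move=> e; rewrite -e; have := mdegD m (mnm1 i); rewrite mdeg1 addn1 => h; exact: (esym (congr1 predn h)).
Qed.

Lemma homog_dpow d i k (p : MP) : p \is d.-homog -> dpow i k p \is (d - k).-homog.
Proof.
move=> hp; elim: k => [|k IH]; first by rewrite subn0.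
by rewrite subnS; apply: homog_mderiv.
Qed.

Lemma homog_dop d m (w : Frm) : (forall T, w T \is d.-homog) ->
  forall T, dop m w T \is (d - m).-homog.
Proof.
move=> h T; rewrite dopE; apply: rpred_sum => l _; case: ifP => _; last exact: rpred0.
rewrite sign_mul; case: odd; rewrite ?rpredN; exact: homog_dpow.
Qed.

Lemma homog_Om d ms (p : MP) : p \is d.-homog ->
  forall T, Om ms p T \is (d - sumn ms).-homog.
Proof.
move=> hp; rewrite /Om; elim: ms => [|m ms IH] /= T.
  by rewrite subn0 /zero_form ffunE; case: ifP => _ //; exact: rpred0.
by rewrite addnC subnDA; apply: homog_dop.
Qed.

End P4.

Lemma exists_max (s : seq nat) : s != [::] -> exists2 M, M \in s & all (fun x => x <= M)%N s.
Proof.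
elim: s => [//|x t IH] _.
case: (eqVneq t [::]) => [->|/IH [M Mt hM]].
  by exists x; rewrite ?inE ?eqxx //= leqnn.
case: (leqP M x) => h.
  exists x; first by rewrite inE eqxx.
  rewrite /= leqnn /=; apply/allP => y yt; have := allP hM y yt; move=> hy.
  exact: leq_trans hy h.
exists M; first by rewrite inE Mt orbT.
by rewrite /= (ltnW h) hM.
Qed.

Lemma uniq_sum_bin (s : seq nat) : uniq s -> ('C(size s, 2) <= \sum_(x <- s) x)%N.
Proof.
move: {2}(size s) (erefl (size s)) => k; elim: k s => [|k IH] s hs us.
  by rewrite hs.
have /exists_max [M Ms hM] : s != [::] by apply/eqP => e; move: hs; rewrite e.
rewrite (perm_big _ (perm_to_rem Ms)) big_cons.
have hs' : size (rem M s) = k by rewrite size_rem // hs.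
have us' : uniq (rem M s) by apply: rem_uniq.
have := IH _ hs' us'; rewrite hs' => ih.
have hk : (k <= M)%N.
  rewrite -hs' -[X in (_ <= X)%N](size_iota 0 M); apply: uniq_leq_size => // x.
  rewrite (mem_rem_uniq _ us) !inE mem_iota /= add0n => /andP [xM xs].
  by rewrite ltn_neqAle xM (allP hM x xs).
rewrite hs binS bin1 addnC; exact: (leq_add hk ih).
Qed.

Section P5.
Variable R : realType.
Variable n : nat.
Local Notation MP := {mpoly R[n]}.

Lemma msym_mderiv (s : 'S_n) i (p : MP) : msym s (mderiv i p) = mderiv (s i) (msym s p).
Proof.
apply/mpolyP => m; rewrite mcoeff_sym !mcoeff_deriv mcoeff_sym mnmE.
congr (p@_ _ *+ _); apply/mnmP => j; rewrite !mnmE.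
by rewrite (inj_eq perm_inj).
Qed.

Lemma msym_dpow (s : 'S_n) i k (p : MP) : msym s (dpow i k p) = dpow (s i) k (msym s p).
Proof. by elim: k => [//|k IH]; rewrite /dpow /= -/(dpow i k p) msym_mderiv IH. Qed.

Lemma msymXi (s : 'S_n) i : msym s ('X_i : MP) = 'X_(s i).
Proof. by rewrite /msym mmapX mmap1U. Qed.

Definition AS (p : MP) := forall s : 'S_n, msym s p = (-1) ^+ odd_perm s *: p.

Lemma AS_inj (p : MP) m : AS p -> p@_m != 0 -> injective (fun i : 'I_n => m i).
Proof.
move=> hp nz i j /= e; apply/eqP; apply: contraNT nz => ne.
have := congr1 (mcoeff m) (hp (tperm i j)).
rewrite mcoeff_sym mcoeffZ odd_tperm ne expr1.
have -> : [multinom m (tperm i j k) | k < n] = m.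
  apply/mnmP => k; rewrite mnmE; case: tpermP => // ->; by [rewrite e|rewrite -e].
move=> h; apply/eqP; lra.
Qed.

Lemma AS_deg (p : MP) m : AS p -> p@_m != 0 -> ('C(n, 2) <= mdeg m)%N.
Proof.
move=> hp nz; have inj := AS_inj hp nz.
have := uniq_sum_bin (_ : uniq (map (fun i : 'I_n => m i) (enum 'I_n))).
rewrite size_map size_enum_ord big_map big_enum /= -mdegE; apply.
by rewrite map_inj_uniq // enum_uniq.
Qed.

End P5.

Section P6.
Variable R : realType.
Variable n : nat.
Local Notation MP := {mpoly R[n]}.

Definition Vrow : 'rV[MP]_n := \row_j (- 'X_j).

Lemma Vdm_det : Vdm R n = \det (Vandermonde n Vrow).
Proof.
rewrite det_Vandermonde /Vdm; apply: eq_bigr => i _; apply: eq_bigr => j _.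
by rewrite !mxE opprK addrC.
Qed.

Lemma Vdm_AS : AS (Vdm R n).
Proof.
move=> s; rewrite Vdm_det -det_map_mx.
have -> : map_mx (msym s) (Vandermonde n Vrow) = col_perm s (Vandermonde n Vrow).
  by apply/matrixP => i j; rewrite !mxE rmorphXn rmorphN -(@msymXi R n s j).
rewrite col_permE det_mulmx det_perm odd_permV mulrC.
by rewrite mulr_sign scaler_sign.
Qed.


Lemma homog_prod_gen (I : Type) (r : seq I) (P : pred I) (Fp : I -> MP) (d : I -> nat) :
  (forall x, P x -> Fp x \is (d x).-homog) ->
  \prod_(x <- r | P x) Fp x \is (\sum_(x <- r | P x) d x)%N.-homog.
Proof.
move=> h; elim: r => [|x r IH]; rewrite ?big_nil ?big_cons; first exact: dhomog1.
by case: ifP => Px //; apply: dhomogM => //; apply: h.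
Qed.

Lemma homogXB (i j : 'I_n) : ('X_i - 'X_j : MP) \is 1%N.-homog.
Proof. by apply: rpredB; rewrite dhomogX /= mdeg1. Qed.

Lemma cnt_pairs : (\sum_(i < n) \sum_(j < n | (i < j)%N) 1 = 'C(n, 2))%N.
Proof.
under eq_bigr => i _ do rewrite big_mkcond /=.
rewrite exchange_big /=.
under eq_bigr => j _ do rewrite -big_mkcond /=.
have h : forall j : 'I_n, (\sum_(i < n | (i < j)%N) 1 = j)%N.
  move=> j; rewrite -(big_mkord (fun i => i < j)%N (fun _ => 1%N)).
  rewrite -(big_nat_widen 0 j n xpredT (fun _ => 1%N)) ?(ltnW (ltn_ord j)) //.
  by rewrite sum_nat_const_nat subn0 muln1.
under eq_bigr => j _ do rewrite h.
by rewrite -(big_mkord xpredT (fun j => j)) bin2_sum.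
Qed.

Lemma Vdm_homog : Vdm R n \is 'C(n, 2).-homog.
Proof.
rewrite -cnt_pairs /Vdm; apply: homog_prod_gen => i _.
by apply: homog_prod_gen => j _; apply: homogXB.
Qed.

Lemma dpow_coeff_deg d i k (p : MP) m : p \is d.-homog ->
  (dpow i k p)@_m != 0 -> (mdeg m + k)%N = d.
Proof.
move=> hp; elim: k m => [|k IH] m nz.
  rewrite addn0; apply/eqP; apply: contraNT nz => ne; apply/eqP.
  exact: (dhomog_nemf_coeff hp ne).
move: nz; rewrite /dpow /= -/(dpow i k p) mcoeff_deriv => nz.
have nz' : (dpow i k p)@_(m + mnm1 i)%MM != 0.
  by apply: contraNneq nz => ->; rewrite mul0rn.
by rewrite -(IH _ nz') mdegD mdeg1 addn1 addSnnS.
Qed.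

Lemma Vdm_SH : SH (Vdm R n).
Proof.
move=> k k0; set q := \sum_(i < n) dpow i k (Vdm R n).
have Aq : AS q.
  move=> s; rewrite /q raddf_sum /=.
  under eq_bigr => i _ do rewrite msym_dpow Vdm_AS dpowZ.
  rewrite -scaler_sumr; congr (_ *: _).
  by rewrite [RHS](reindex_inj (@perm_inj _ s)).
apply/mpolyP => m; rewrite mcoeff0.
case: (eqVneq (q@_m) 0) => // nzq.
have hd := AS_deg Aq nzq.
case: (pickP (fun i => (dpow i k (Vdm R n))@_m != 0)) => [i nzi|h].
  have := dpow_coeff_deg Vdm_homog nzi; lia.
move: nzq; rewrite /q raddf_sum big1 ?eqxx // => i _; apply/eqP.
by have := h i => /negbFE.
Qed.

End P6.

Section P7.
Variable n : nat.
Variable s : 'S_n.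

Definition invc (I : {set 'I_n}) :=
  #|[set p : 'I_n * 'I_n | [&& p.1 \in I, p.2 \in I, (p.1 < p.2)%N & (s p.2 < s p.1)%N]]|.

Lemma permimK (A : {set 'I_n}) : s @: ((s^-1)%g @: A) = A.
Proof.
rewrite -imset_comp (eq_imset (g := id)) ?imset_id // => x /=; exact: permKV.
Qed.
Lemma permimKV (A : {set 'I_n}) : (s^-1)%g @: (s @: A) = A.
Proof.
rewrite -imset_comp (eq_imset (g := id)) ?imset_id // => x /=; exact: permK.
Qed.

Lemma mem_imV (T : {set 'I_n}) l : (l \in (s^-1)%g @: T) = (s l \in T).
Proof. by rewrite -{1}(permK s l) mem_imset //; exact: perm_inj. Qed.

Lemma imVD1 (T : {set 'I_n}) l : (s^-1)%g @: (T :\ s l) = ((s^-1)%g @: T) :\ l.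
Proof.
apply/setP => x; rewrite !inE !mem_imV !inE; congr (_ && _).
by rewrite (inj_eq perm_inj).
Qed.

Lemma neq_s (i l : 'I_n) : i != l -> (s i < s l)%N || (s l < s i)%N.
Proof.
move=> ne; case: (ltngtP (s i) (s l)) => // /val_inj /perm_inj e.
by move: ne; rewrite e eqxx.
Qed.

Lemma neq_ord (i l : 'I_n) : i != l -> (i < l)%N || (l < i)%N.
Proof.
move=> ne; case: (ltngtP i l) => // /val_inj e.
by move: ne; rewrite e eqxx.
Qed.

Section Count.
Variable I : {set 'I_n}.
Variable l : 'I_n.
Hypothesis lI : l \in I.

Let SA := [set i in I | (i < l)%N && (s i < s l)%N].
Let SB := [set i in I | (i < l)%N && (s l < s i)%N].
Let SC := [set i in I | (l < i)%N && (s i < s l)%N].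

Lemma cntI : cnt I l = (#|SA| + #|SB|)%N.
Proof.
rewrite /cnt -(cardsID [set i | (s i < s l)%N]).
have -> : [set i in I | (i < l)%N] :&: [set i | (s i < s l)%N] = SA.
  by apply/setP => i; rewrite !inE andbA.
have -> : [set i in I | (i < l)%N] :\: [set i | (s i < s l)%N] = SB.
  apply/setP => i; rewrite !inE.
  case: (ltnP i l) => il; rewrite ?andbF //=.
  have ne : i != l by apply/eqP => e; move: il; rewrite e ltnn.
  case: (ltnP (s i) (s l)) => h /=; first by rewrite ltnNge (ltnW h) andbF.
  have := neq_s ne; rewrite ltnNge h /= => ->; by rewrite !andbT.
by [].
Qed.

Lemma cntT : cnt (s @: I) (s l) = (#|SA| + #|SC|)%N.
Proof.
rewrite /cnt.
have -> : [set t in s @: I | (t < s l)%N] = s @: [set i in I | (s i < s l)%N].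
  apply/setP => t; rewrite !inE -[t](permKV s) !mem_imset ?inE //; exact: perm_inj.
rewrite card_imset; last exact: perm_inj.
rewrite -(cardsID [set i : 'I_n | (i < l)%N]).
have -> : [set i in I | (s i < s l)%N] :&: [set i : 'I_n | (i < l)%N] = SA.
  by apply/setP => i; rewrite !inE -andbA [X in _ && X]andbC.
have -> : [set i in I | (s i < s l)%N] :\: [set i : 'I_n | (i < l)%N] = SC.
  apply/setP => i; rewrite !inE.
  case: (ltnP (s i) (s l)) => il; rewrite ?andbF //=.
  have ne : i != l by apply/eqP => e; move: il; rewrite e ltnn.
  case: (ltnP i l) => h /=; first by rewrite ltnNge (ltnW h) andbF.
  have := neq_ord ne; rewrite ltnNge h /= => ->; by rewrite !andbT.
by [].
Qed.

Lemma mem_pair_l (A : {set 'I_n}) a b :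
  ((a, b) \in [set (i, l) | i in A]) = (b == l) && (a \in A).
Proof.
apply/imsetP/andP => [[i iA [-> ->]]|[/eqP -> aA]]; first by rewrite eqxx.
by exists a.
Qed.
Lemma mem_pair_r (A : {set 'I_n}) a b :
  ((a, b) \in [set (l, i) | i in A]) = (a == l) && (b \in A).
Proof.
apply/imsetP/andP => [[i iA [-> ->]]|[/eqP -> aA]]; first by rewrite eqxx.
by exists b.
Qed.

Lemma invI : invc I = (invc (I :\ l) + #|SB| + #|SC|)%N.
Proof.
rewrite /invc -(cardsID [set p : 'I_n * 'I_n | (p.1 == l) || (p.2 == l)]) addnC -addnA.
congr (_ + _)%N.
  apply: eq_card => -[a b]; rewrite !inE /=.
  by case: (a == l); case: (b == l); rewrite /= ?andbF.
rewrite -(cardsID [set p : 'I_n * 'I_n | p.2 == l]).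
have -> : [set p : 'I_n * 'I_n | [&& p.1 \in I, p.2 \in I, (p.1 < p.2)%N & (s p.2 < s p.1)%N]]
   :&: [set p : 'I_n * 'I_n | (p.1 == l) || (p.2 == l)] :&: [set p : 'I_n * 'I_n | p.2 == l]
   = [set (i, l) | i in SB].
  apply/setP => -[a b]; rewrite mem_pair_l !inE /=.
  case: (eqVneq b l) => [->|bl]; rewrite ?andbF //= lI /= orbT.
  by rewrite !andbT.
have -> : [set p : 'I_n * 'I_n | [&& p.1 \in I, p.2 \in I, (p.1 < p.2)%N & (s p.2 < s p.1)%N]]
   :&: [set p : 'I_n * 'I_n | (p.1 == l) || (p.2 == l)] :\: [set p : 'I_n * 'I_n | p.2 == l]
   = [set (l, i) | i in SC].
  apply/setP => -[a b]; rewrite mem_pair_r !inE /=.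
  case: (eqVneq b l) => [->|bl] /=; first by rewrite ltnn !andbF.
  case: (eqVneq a l) => [->|al] /=; last by rewrite !andbF.
  by rewrite lI andbT.
rewrite !card_imset //; by move=> x y [].
Qed.

Lemma sign_wedge (R : nzRingType) :
  (-1) ^+ (cnt (s @: I) (s l) + invc (I :\ l)) = (-1) ^+ (invc I + cnt I l) :> R.
Proof.
rewrite cntT invI cntI.
have -> : (invc (I :\ l) + #|SB| + #|SC| + (#|SA| + #|SB|) =
           (#|SA| + #|SC| + invc (I :\ l)) + (#|SB|).*2)%N by rewrite -addnn; lia.
by rewrite [in RHS]exprD -[(-1) ^+ (_.*2)]signr_odd odd_double expr0 mulr1.
Qed.

End Count.
End P7.

Section P8.
Variable R : realType.
Variable n : nat.
Local Notation MP := {mpoly R[n]}.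
Local Notation Frm := (Defs.form R n).

Lemma actE (s : 'S_n) (w : Frm) T :
  act_form s w T = (-1) ^+ invc s ((s^-1)%g @: T) * msym s (w ((s^-1)%g @: T)).
Proof.
rewrite /act_form sum_ffunE (bigD1 ((s^-1)%g @: T)) //= ffunE permimK eqxx.
rewrite big1 ?addr0 // => I ne; rewrite ffunE; case: eqP => // e.
by move: ne; rewrite e permimKV eqxx.
Qed.

Lemma actD (s : 'S_n) (v w : Frm) : act_form s (v + w) = act_form s v + act_form s w.
Proof. by apply/ffunP => T; rewrite ffunE !actE ffunE msymD mulrDr. Qed.
Lemma act0 (s : 'S_n) : act_form s (0 : Frm) = 0.
Proof. by apply/ffunP => T; rewrite actE !ffunE msym0 mulr0. Qed.
Lemma act_sum (s : 'S_n) (I : Type) (r : seq I) (P : pred I) (G : I -> Frm) :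
  act_form s (\sum_(x <- r | P x) G x) = \sum_(x <- r | P x) act_form s (G x).
Proof. exact: (big_morph _ (actD s) (act0 s)). Qed.

Lemma act_fmap (s : 'S_n) l k (w : Frm) :
  fmapf (dpow (s l) k) (act_form s w) = act_form s (fmapf (dpow l k) w).
Proof. by apply/ffunP => T; rewrite ffunE !actE ffunE dpow_sign msym_dpow. Qed.

Lemma act_wedge (s : 'S_n) l (w : Frm) : wedge_dx (s l) (act_form s w) = act_form s (wedge_dx l w).
Proof.
apply/ffunP => T; rewrite wedgeE !actE wedgeE mem_imV.
case: ifP => lT; last by rewrite msym0 mulr0.
have lI : l \in (s^-1)%g @: T by rewrite mem_imV.
have := sign_wedge s lI {mpoly R[n]}; rewrite permimK => hs.
rewrite imVD1 msymM rmorph_sign !mulrA -!exprD hs.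
by [].
Qed.

Lemma act_dop (s : 'S_n) m (w : Frm) : dop m (act_form s w) = act_form s (dop m w).
Proof.
rewrite /dop act_sum (reindex_inj (@perm_inj _ s)) /=; apply: eq_bigr => l _.
by rewrite act_fmap act_wedge.
Qed.

Lemma act_zero (s : 'S_n) (p : MP) : act_form s (zero_form p) = zero_form (msym s p).
Proof.
apply/ffunP => T; rewrite actE !ffunE imset_eq0.
case: (eqVneq T set0) => [->|ne] /=; last by rewrite msym0 mulr0.
rewrite imset0 /invc.
have -> : [set p : 'I_n * 'I_n | [&& p.1 \in set0, p.2 \in set0, (p.1 < p.2)%N
        & (s p.2 < s p.1)%N]] = set0 by apply/setP => q; rewrite !inE.
by rewrite cards0 expr0 mul1r.
Qed.

Lemma Om_Z ms c (p : MP) : Om ms (c *: p) = c *: Om ms p.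
Proof.
rewrite /Om; elim: ms => [|m ms IH] /=; last by rewrite IH dopZ.
by apply/ffunP => T; rewrite !ffunE; case: ifP; rewrite ?scaler0.
Qed.

Lemma act_Om (s : 'S_n) ms (p : MP) : act_form s (Om ms p) = Om ms (msym s p).
Proof.
rewrite /Om; elim: ms => [|m ms IH] /=; last by rewrite -act_dop IH.
exact: act_zero.
Qed.

End P8.

Unset Implicit Arguments.

Theorem lemma10 (R : realType) (n : nat) (ms : seq nat) :
  sorted (fun a b => (b < a)%N) ms ->
  all (fun m => (1 <= m <= n.-1)%N) ms ->
  in_H ('C(n, 2) - sumn ms)%N (size ms) (omega R n ms) /\
  (forall s : 'S_n,
     act_form s (omega R n ms) = ((-1) ^+ odd_perm s) *: omega R n ms).
Proof.
move=> _ hall.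
have hpos : all (fun m => 0 < m)%N ms.
  by apply/allP => m /(allP hall) /andP [].
have [hSH hdelta] := Om_delta (@Vdm_SH R n) hpos.
have -> : omega R n ms = Om ms (Vdm R n) by [].
split.
  split.
  - exact: supp_Om.
  - move=> I; split; last exact: (homog_Om ms (@Vdm_homog R n) I).
    by move=> k /andP [k1 _]; apply: hSH.
  - by move=> j _; apply: hdelta.
by move=> s; rewrite act_Om Vdm_AS Om_Z.
Qed.
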